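(* Let $u_0,v_0>0$, $s_0>1$, let $\omega_0>0$ and $\omega_1,\omega_2,\dots\in\mathbb{R}$, and let $U_k,V_k:\mathbb{R}\to\mathbb{R}$ ($k\ge1$) be real analytic $2\pi$-periodic functions with Fourier expansions $U_k(t)=\sum_{n\in\mathbb{Z}}\hat U_k(n)e^{int}$, $V_k(t)=\sum_{n\in\mathbb{Z}}\hat V_k(n)e^{int}$. Put $\omega(\varepsilon)=\sum_{k\ge0}\omega_k\varepsilon^k$, $U(t,\varepsilon)=\sum_{k\ge1}U_k(t)\varepsilon^k$, $V(t,\varepsilon)=\sum_{k\ge1}V_k(t)\varepsilon^k$, and let $d_k(t)$ denote the coefficient of $\varepsilon^k$ in the formal Taylor expansion in $\varepsilon$ of $$\frac{U(t,\varepsilon)+u_0}{V(t-s_0\omega(\varepsilon),\varepsilon)+v_0},$$ so that $d_0=u_0/v_0$. For $k\ge2$ write $d_k(t)=\sum_{n\in\mathbb{Z}}\hat d_k(n)e^{int}$ with $\hat d_k(n)=\overline{\hat d_k(-n)}$. Then for every $k\ge2$ and $n\in\mathbb{Z}$, $$\hat d_k(n)=\frac{d_0}{v_0}\,ni\,\omega_{k-1}s_0\,\hat V_1(n)e^{-ni\omega_0s_0}+h,$$ where $h$ is an expression whose terms depend only on $\hat U_1,\hat V_1,\dots,\hat U_k,\hat V_k$ and $\omega_0,\dots,\omega_{k-2}$ (and on $n$, $u_0$, $v_0$, $s_0$).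
   Context: The expansion of $V_j(t-s_0\omega(\varepsilon))$ in $\varepsilon$ is the Taylor expansion of $V_j$ about $t-s_0\omega_0$ composed with $\omega(\varepsilon)-\omega_0$; the quotient is expanded as a formal power series in $\varepsilon$. *)

(* Defs.v *)
From Stdlib Require Import Reals ZArith.
From Coquelicot Require Import Coquelicot.
Open Scope R_scope.

(** Formal power series in epsilon (coefficient sequences). *)
Definition ps := nat -> R.
Definition ps_one : ps := fun k => match k with O => 1 | _ => 0 end.
Definition ps_mul (a b : ps) : ps :=
  fun k => sum_f_R0 (fun i => a i * b (k - i)%nat) k.
Definition ps_pow (a : ps) (p : nat) : ps := Nat.iter p (ps_mul a) ps_one.

(** [delta omega s0] = - s0 (omega(eps) - omega_0), a series with zero constant term. *)
Definition delta (omega : nat -> R) (s0 : R) : ps :=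
  fun k => match k with O => 0 | _ => - s0 * omega k end.

(** Coefficient of eps^m in V_j(t - s0 omega(eps)): Taylor expansion of V_j about
    t - s0 omega_0 composed with omega(eps) - omega_0 (only p <= m contribute). *)
Definition shifted_coef (f : R -> R) (omega : nat -> R) (s0 t : R) (m : nat) : R :=
  sum_f_R0 (fun p => Derive_n f p (t - s0 * omega O) / INR (fact p)
                     * ps_pow (delta omega s0) p m) m.

Definition num_ps (U : nat -> R -> R) (u0 t : R) : ps :=
  fun k => match k with O => u0 | _ => U k t end.

(** B(t,eps) := V(t - s0 omega(eps), eps), zero constant term. *)
Definition den_tail (V : nat -> R -> R) (omega : nat -> R) (s0 t : R) : ps :=
  fun k => match k with
           | O => 0
           | _ => sum_f_R0 (fun j => match j with
                                     | O => 0
                                     | _ => shifted_coef (V j) omega s0 t (k - j)%nat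
                                     end) k
           end.

(** 1/(v0 + B) = sum_p (-B)^p / v0^(p+1), exact coefficientwise since B = O(eps). *)
Definition inv_den_ps (V : nat -> R -> R) (omega : nat -> R) (v0 s0 t : R) : ps :=
  fun k => sum_f_R0 (fun p => ps_pow (fun i => - den_tail V omega s0 t i) p k
                              / v0 ^ (S p)) k.

Definition dcoef (U V : nat -> R -> R) (omega : nat -> R) (u0 v0 s0 : R)
  (k : nat) (t : R) : R :=
  ps_mul (num_ps U u0 t) (inv_den_ps V omega v0 s0 t) k.

Definition cis (th : R) : C := (cos th, sin th).

(** Fourier coefficient f^(n) = (1/2pi) int_0^{2pi} f(t) e^{-int} dt, for real f,
    written via its real and imaginary parts. *)
Definition fourier (f : R -> R) (n : Z) : C :=
  (/ (2 * PI) * RInt (fun t => f t * cos (IZR n * t)) 0 (2 * PI),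
   - (/ (2 * PI) * RInt (fun t => f t * sin (IZR n * t)) 0 (2 * PI))).

Definition periodic2pi (f : R -> R) : Prop := forall t, f (t + 2 * PI) = f t.

Definition real_analytic (f : R -> R) : Prop :=
  (forall m x, ex_derive_n f m x) /\
  forall x0, exists r, 0 < r /\ forall x, Rabs (x - x0) < r ->
    is_series (fun m => Derive_n f m x0 / INR (fact m) * (x - x0) ^ m) (f x).

(* Main.v *)
Require Import Defs.
From Stdlib Require Import Reals ZArith Lia Lra FunctionalExtensionality ClassicalEpsilon.
From Coquelicot Require Import Coquelicot.
Open Scope R_scope.

Lemma sum_zero (f : nat -> R) n : (forall i, (i <= n)%nat -> f i = 0) -> sum_f_R0 f n = 0.
Proof.
  induction n; intros H; simpl. apply H; lia.
  rewrite IHn. rewrite H; lia || ring. intros; apply H; lia.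
Qed.

Lemma sum_single (f : nat -> R) n j : (j <= n)%nat ->
  (forall i, (i <= n)%nat -> i <> j -> f i = 0) -> sum_f_R0 f n = f j.
Proof.
  induction n; intros Hj H.
  - simpl. assert (j = 0)%nat by lia. subst; reflexivity.
  - simpl. destruct (Nat.eq_dec j (S n)).
    + subst. rewrite sum_zero. ring. intros; apply H; lia.
    + rewrite IHn by (lia || (intros; apply H; lia)). rewrite (H (S n)) by lia. ring.
Qed.

Lemma ps_mul_ext a b a' b' k : (forall i, (i <= k)%nat -> a i = a' i) ->
  (forall i, (i <= k)%nat -> b i = b' i) -> ps_mul a b k = ps_mul a' b' k.
Proof.
  intros Ha Hb. unfold ps_mul. apply sum_eq. intros i Hi. rewrite Ha, Hb by lia. reflexivity.
Qed.

Lemma ps_pow_S a p : ps_pow a (S p) = ps_mul a (ps_pow a p).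
Proof. reflexivity. Qed.

Lemma ps_pow_ext a b p m : (forall i, (i <= m)%nat -> a i = b i) -> ps_pow a p m = ps_pow b p m.
Proof.
  revert m; induction p; intros m H. reflexivity.
  rewrite !ps_pow_S. apply ps_mul_ext. exact H. intros i Hi. apply IHp. intros; apply H; lia.
Qed.

Lemma ps_pow_low a : a O = 0 -> forall p j, (j < p)%nat -> ps_pow a p j = 0.
Proof.
  intros Ha0 p; induction p; intros j Hj. lia.
  rewrite ps_pow_S. unfold ps_mul. apply sum_zero. intros i Hi.
  destruct i. rewrite Ha0; ring. rewrite IHp by lia. ring.
Qed.

Lemma ps_pow1 a m : ps_pow a 1 m = a m.
Proof.
  rewrite ps_pow_S. unfold ps_mul. rewrite (sum_single _ m m) by (lia || (intros i Hi Hne;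
    simpl; destruct (m - i)%nat eqn:E; [lia | unfold ps_one; ring])).
  rewrite Nat.sub_diag. simpl. ring.
Qed.

Lemma ps_pow_near a b N : a O = 0 -> b O = 0 -> (forall i, (i < N)%nat -> a i = b i) ->
  forall p m, (m < N + p)%nat -> ps_pow a (S p) m = ps_pow b (S p) m.
Proof.
  intros Ha Hb H p; induction p; intros m Hm.
  - apply ps_pow_ext. intros; apply H; lia.
  - rewrite (ps_pow_S a), (ps_pow_S b). unfold ps_mul. apply sum_eq. intros i Hi.
    destruct i. rewrite Ha, Hb; ring.
    destruct (Nat.lt_ge_cases (S i) N).
    + rewrite H by lia. rewrite IHp by lia. reflexivity.
    + rewrite !(ps_pow_low _ Ha (S p)), !(ps_pow_low _ Hb (S p)) by lia. ring.
Qed.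


Lemma shifted_eq (omega omega' : nat -> R) (s0 t : R) (N : nat) (H0 : omega O = omega' O) (Hd : forall i, (i < N)%nat -> delta omega s0 i = delta omega' s0 i) f m : (m < N)%nat -> shifted_coef f omega s0 t m = shifted_coef f omega' s0 t m.
Proof.
  intros Hm. unfold shifted_coef. apply sum_eq. intros p Hp. rewrite H0.
  destruct p. reflexivity.
  rewrite (ps_pow_near _ _ N eq_refl eq_refl Hd) by lia. reflexivity.
Qed.

Lemma shifted_diff (omega omega' : nat -> R) (s0 t : R) (N : nat) (H0 : omega O = omega' O) (Hd : forall i, (i < N)%nat -> delta omega s0 i = delta omega' s0 i) f : (1 <= N)%nat ->
  shifted_coef f omega s0 t N - shifted_coef f omega' s0 t N =
  Derive_n f 1 (t - s0 * omega O) * (delta omega s0 N - delta omega' s0 N).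
Proof.
  intros HN. unfold shifted_coef. rewrite <- minus_sum.
  rewrite (sum_single _ N 1) by (lia || (intros p Hp Hne; rewrite H0; destruct p; [simpl; ring|];
    destruct p; [lia|]; rewrite (ps_pow_near _ _ N eq_refl eq_refl Hd) by lia; ring)).
  rewrite H0, !ps_pow1. simpl INR. field.
Qed.

Lemma den_eq (omega omega' : nat -> R) (s0 t : R) (N : nat) (H0 : omega O = omega' O) (Hd : forall i, (i < N)%nat -> delta omega s0 i = delta omega' s0 i) V i : (i <= N)%nat -> den_tail V omega s0 t i = den_tail V omega' s0 t i.
Proof.
  intros Hi. unfold den_tail. destruct i. reflexivity.
  apply sum_eq. intros j Hj. destruct j. reflexivity. apply (shifted_eq omega omega' s0 t N H0 Hd). lia.
Qed.

Lemma den_diff (omega omega' : nat -> R) (s0 t : R) (N : nat) (H0 : omega O = omega' O) (Hd : forall i, (i < N)%nat -> delta omega s0 i = delta omega' s0 i) V : (1 <= N)%nat ->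
  den_tail V omega s0 t (S N) - den_tail V omega' s0 t (S N) =
  Derive_n (V 1%nat) 1 (t - s0 * omega O) * (delta omega s0 N - delta omega' s0 N).
Proof.
  intros HN. unfold den_tail. rewrite <- minus_sum.
  rewrite (sum_single _ (S N) 1) by (lia || (intros j Hj Hne; destruct j; [ring|];
     rewrite (shifted_eq omega omega' s0 t N H0 Hd) by lia; ring)).
  replace (S N - 1)%nat with N by lia. apply (shifted_diff omega omega' s0 t N H0 Hd); auto.
Qed.

Lemma inv_eq (omega omega' : nat -> R) (s0 t : R) (N : nat) (H0 : omega O = omega' O) (Hd : forall i, (i < N)%nat -> delta omega s0 i = delta omega' s0 i) V v0 i : (i <= N)%nat -> inv_den_ps V omega v0 s0 t i = inv_den_ps V omega' v0 s0 t i.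
Proof.
  intros Hi. unfold inv_den_ps. apply sum_eq. intros p Hp. f_equal. apply ps_pow_ext.
  intros j Hj. rewrite (den_eq omega omega' s0 t N H0 Hd) by lia. reflexivity.
Qed.

Lemma inv_diff (omega omega' : nat -> R) (s0 t : R) (N : nat) (H0 : omega O = omega' O) (Hd : forall i, (i < N)%nat -> delta omega s0 i = delta omega' s0 i) V v0 : (1 <= N)%nat -> v0 <> 0 ->
  inv_den_ps V omega v0 s0 t (S N) - inv_den_ps V omega' v0 s0 t (S N) =
  - (Derive_n (V 1%nat) 1 (t - s0 * omega O) * (delta omega s0 N - delta omega' s0 N)) / v0 ^ 2.
Proof.
  intros HN Hv. unfold inv_den_ps. rewrite <- minus_sum.
  rewrite (sum_single _ (S N) 1) by (lia || (intros p Hp Hne; destruct p; [simpl; field; auto|];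
     destruct p; [lia|]; rewrite (ps_pow_near (fun i => - den_tail V omega s0 t i) (fun i => - den_tail V omega' s0 t i) (S N)); [field; apply pow_nonzero; auto
     | simpl; ring | simpl; ring | intros; rewrite (den_eq omega omega' s0 t N H0 Hd) by lia; reflexivity | lia])).
  rewrite !ps_pow1. rewrite <- (den_diff omega omega' s0 t N H0 Hd V HN). simpl. field. auto.
Qed.

Lemma dcoef_diff (omega omega' : nat -> R) (s0 t : R) (N : nat) (H0 : omega O = omega' O) (Hd : forall i, (i < N)%nat -> delta omega s0 i = delta omega' s0 i) U V u0 v0 : (1 <= N)%nat -> v0 <> 0 ->
  dcoef U V omega u0 v0 s0 (S N) t - dcoef U V omega' u0 v0 s0 (S N) t =
  u0 * (- (Derive_n (V 1%nat) 1 (t - s0 * omega O) * (delta omega s0 N - delta omega' s0 N)) / v0 ^ 2).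
Proof.
  intros HN Hv. unfold dcoef, ps_mul. rewrite <- minus_sum.
  rewrite (sum_single _ (S N) 0) by (lia || (intros i Hi Hne;
     rewrite (inv_eq omega omega' s0 t N H0 Hd V v0 (S N - i)) by lia; ring)).
  rewrite <- (inv_diff omega omega' s0 t N H0 Hd) by auto. simpl. ring.
Qed.

Lemma dcoef_congr U V U' V' omega u0 v0 s0 k t :
  (forall j, (1 <= j <= k)%nat -> U j = U' j) ->
  (forall j, (1 <= j <= k)%nat -> V j = V' j) ->
  dcoef U V omega u0 v0 s0 k t = dcoef U' V' omega u0 v0 s0 k t.
Proof.
  intros HU HV. unfold dcoef. apply ps_mul_ext.
  - intros i Hi. unfold num_ps. destruct i. reflexivity. rewrite HU by lia. reflexivity.
  - intros i Hi. unfold inv_den_ps. apply sum_eq. intros p Hp. f_equal. apply ps_pow_ext.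
    intros j Hj. unfold den_tail. destruct j. reflexivity. f_equal. apply sum_eq.
    intros l Hl. destruct l. reflexivity. rewrite HV by lia. reflexivity.
Qed.

Definition Cont (f : R -> R) := forall x, continuous f x.

Lemma Cont_const c : Cont (fun _ => c).
Proof. intros x; apply continuous_const. Qed.
Lemma Cont_plus f g : Cont f -> Cont g -> Cont (fun t => f t + g t).
Proof. intros Hf Hg x. apply (continuous_plus f g x); auto. Qed.
Lemma Cont_mult f g : Cont f -> Cont g -> Cont (fun t => f t * g t).
Proof. intros Hf Hg x. apply (continuous_mult f g x); auto. Qed.
Lemma Cont_opp f : Cont f -> Cont (fun t => - f t).
Proof. intros Hf x. apply (continuous_opp f x); auto. Qed.
Lemma Cont_ext f g : (forall x, f x = g x) -> Cont f -> Cont g.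
Proof. intros E Hf x. apply (continuous_ext f g x E); auto. Qed.

Lemma Cont_sum (F : R -> nat -> R) n : (forall i, (i <= n)%nat -> Cont (fun t => F t i)) ->
  Cont (fun t => sum_f_R0 (F t) n).
Proof.
  induction n; intros H. simpl. apply H; lia.
  simpl. apply Cont_plus. apply IHn; intros; apply H; lia. apply H; lia.
Qed.

Lemma Cont_ps_mul (a b : R -> ps) k : (forall i, (i <= k)%nat -> Cont (fun t => a t i)) ->
  (forall i, (i <= k)%nat -> Cont (fun t => b t i)) -> Cont (fun t => ps_mul (a t) (b t) k).
Proof.
  intros Ha Hb. unfold ps_mul. apply (Cont_sum (fun t i => a t i * b t (k - i)%nat)).
  intros i Hi. apply Cont_mult. apply Ha; lia. apply Hb; lia.
Qed.

Lemma Cont_ps_pow (a : R -> ps) p m : (forall i, (i <= m)%nat -> Cont (fun t => a t i)) ->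
  Cont (fun t => ps_pow (a t) p m).
Proof.
  revert m; induction p; intros m H. apply (Cont_ext (fun _ => ps_one m)). reflexivity. apply Cont_const.
  apply (Cont_ps_mul a (fun t => ps_pow (a t) p)). exact H. intros i Hi. apply IHp. intros; apply H; lia.
Qed.

Definition smooth (f : R -> R) := forall m x, ex_derive_n f m x.

Lemma Cont_Dshift f p c : smooth f -> Cont (fun t => Derive_n f p (t - c)).
Proof.
  intros Hf x. apply (@continuous_comp R_UniformSpace R_UniformSpace R_UniformSpace (fun t => t - c) (Derive_n f p) x).
  apply (@ex_derive_continuous R_AbsRing R_NormedModule). auto_derive. auto.
  apply (@ex_derive_continuous R_AbsRing R_NormedModule). apply (Hf (S p)).
Qed.

Lemma Cont_smooth f : smooth f -> Cont f.
Proof. intros Hf. apply (Cont_ext (fun t => Derive_n f 0 (t - 0))). intros; simpl; f_equal; ring.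
  apply Cont_Dshift; auto. Qed.

Lemma Cont_dcoef U V omega u0 v0 s0 k :
  (forall j, (1 <= j)%nat -> smooth (U j)) -> (forall j, (1 <= j)%nat -> smooth (V j)) ->
  Cont (fun t => dcoef U V omega u0 v0 s0 k t).
Proof.
  intros HU HV. unfold dcoef. apply (Cont_ps_mul (fun t => num_ps U u0 t) (fun t => inv_den_ps V omega v0 s0 t)).
  - intros i _. unfold num_ps. destruct i. apply Cont_const. apply Cont_smooth, HU; lia.
  - intros i _. unfold inv_den_ps. apply (Cont_sum (fun t p => ps_pow (fun i => - den_tail V omega s0 t i) p i / v0 ^ S p)).
    intros p _. apply (Cont_mult (fun t => ps_pow (fun i => - den_tail V omega s0 t i) p i) (fun _ => / v0 ^ S p)); [|apply Cont_const].
    apply (Cont_ps_pow (fun t i => - den_tail V omega s0 t i)). intros j _.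
    apply Cont_opp. unfold den_tail. destruct j. apply Cont_const.
    apply (Cont_sum (fun t l => match l with O => 0 | S _ => shifted_coef (V l) omega s0 t (S j - l)%nat end)).
    intros l _. destruct l. apply Cont_const. unfold shifted_coef.
    apply (Cont_sum (fun t p => Derive_n (V (S l)) p (t - s0 * omega O) / INR (fact p) * ps_pow (delta omega s0) p (S j - S l)%nat)).
    intros q _. apply (Cont_mult (fun t => Derive_n (V (S l)) q (t - s0 * omega O) / INR (fact q)) (fun _ => _)); [|apply Cont_const].
    apply (Cont_mult (fun t => Derive_n (V (S l)) q (t - s0 * omega O)) (fun _ => _)); [|apply Cont_const].
    apply Cont_Dshift. apply HV; lia.
Qed.

Ltac req := req.

Definition per (f : R -> R) := forall t, f (t + 2 * PI) = f t.

Lemma cos_Zper x (m : Z) : cos (x + IZR m * (2 * PI)) = cos x.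
Proof.
  destruct m as [|p|p].
  - f_equal; simpl; ring.
  - rewrite <- positive_nat_Z, <- INR_IZR_INZ.
    replace (x + INR (Pos.to_nat p) * (2 * PI)) with (x + 2 * INR (Pos.to_nat p) * PI) by ring.
    apply cos_period.
  - rewrite IZR_NEG, <- positive_nat_Z, <- INR_IZR_INZ.
    rewrite <- (cos_period _ (Pos.to_nat p)). f_equal. ring.
Qed.

Lemma sin_Zper x (m : Z) : sin (x + IZR m * (2 * PI)) = sin x.
Proof.
  destruct m as [|p|p].
  - f_equal; simpl; ring.
  - rewrite <- positive_nat_Z, <- INR_IZR_INZ.
    replace (x + INR (Pos.to_nat p) * (2 * PI)) with (x + 2 * INR (Pos.to_nat p) * PI) by ring.
    apply sin_period.
  - rewrite IZR_NEG, <- positive_nat_Z, <- INR_IZR_INZ.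
    rewrite <- (sin_period _ (Pos.to_nat p)). f_equal. ring.
Qed.

Lemma Cont_ex_RInt f a b : Cont f -> ex_RInt f a b.
Proof. intros H. apply (@ex_RInt_continuous R_CompleteNormedModule). intros; apply H. Qed.

Lemma Cont_cos m c : Cont (fun t => cos (m * t + c)).
Proof. intros x. apply (@ex_derive_continuous R_AbsRing R_NormedModule). auto_derive. auto. Qed.
Lemma Cont_sin m c : Cont (fun t => sin (m * t + c)).
Proof. intros x. apply (@ex_derive_continuous R_AbsRing R_NormedModule). auto_derive. auto. Qed.
Lemma Cont_cos' m : Cont (fun t => cos (m * t)).
Proof. apply (Cont_ext (fun t => cos (m * t + 0))). intros; f_equal; ring. apply Cont_cos. Qed.
Lemma Cont_sin' m : Cont (fun t => sin (m * t)).
Proof. apply (Cont_ext (fun t => sin (m * t + 0))). intros; f_equal; ring. apply Cont_sin. Qed.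

Lemma RInt_lin2 f h c d a b : ex_RInt f a b -> ex_RInt h a b ->
  RInt (fun x => c * f x + d * h x) a b = c * RInt f a b + d * RInt h a b.
Proof.
  intros Hf Hh.
  assert (E1 := RInt_plus (fun x => scal c (f x)) (fun x => scal d (h x)) a b
     (ex_RInt_scal _ _ _ c Hf) (ex_RInt_scal _ _ _ d Hh)).
  rewrite (RInt_scal f), (RInt_scal h) in E1 by assumption. exact E1.
Qed.

Lemma RInt_shift_per w : Cont w -> per w -> forall a, RInt w a (a + 2 * PI) = RInt w 0 (2 * PI).
Proof.
  intros Hc Hp a.
  assert (H1 : RInt w (2 * PI) (a + 2 * PI) = RInt w 0 a).
  { assert (E := RInt_comp_lin w 1 (2 * PI) 0 a (Cont_ex_RInt _ _ _ Hc)).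
    replace (1 * 0 + 2 * PI) with (2 * PI) in E by ring.
    replace (1 * a + 2 * PI) with (a + 2 * PI) in E by ring.
    rewrite <- E. apply RInt_ext. intros x _. unfold scal; simpl; unfold mult; simpl; rewrite Rmult_1_l.
    replace (1 * x + 2 * PI) with (x + 2 * PI) by ring. apply Hp. }
  assert (C1 := RInt_Chasles w a 0 (2 * PI) (Cont_ex_RInt _ _ _ Hc) (Cont_ex_RInt _ _ _ Hc)).
  assert (C2 := RInt_Chasles w a (2 * PI) (a + 2 * PI) (Cont_ex_RInt _ _ _ Hc) (Cont_ex_RInt _ _ _ Hc)).
  assert (S1 := opp_RInt_swap w 0 a (Cont_ex_RInt _ _ _ Hc)).
  rewrite <- C2, <- C1, H1, <- S1. unfold plus, opp; simpl. ring.
Qed.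

Lemma RInt_sub_per w a : Cont w -> per w -> RInt (fun t => w (t - a)) 0 (2 * PI) = RInt w 0 (2 * PI).
Proof.
  intros Hc Hp.
  assert (E := RInt_comp_lin w 1 (- a) 0 (2 * PI) (Cont_ex_RInt _ _ _ Hc)).
  replace (1 * 0 + - a) with (- a) in E by ring.
  replace (1 * (2 * PI) + - a) with (- a + 2 * PI) in E by ring.
  rewrite RInt_shift_per in E by auto. rewrite <- E. apply RInt_ext. intros x _.
  unfold scal; simpl; unfold mult; simpl; rewrite Rmult_1_l. f_equal. ring.
Qed.

Definition intC g (n : Z) : R := RInt (fun t => g t * cos (IZR n * t)) 0 (2 * PI).
Definition intS g (n : Z) : R := RInt (fun t => g t * sin (IZR n * t)) 0 (2 * PI).

Lemma trig_shiftC g a n : Cont g -> per g ->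
  @eq R (RInt (fun t => g (t - a) * cos (IZR n * t)) 0 (2 * PI))
  (cos (IZR n * a) * intC g n - sin (IZR n * a) * intS g n).
Proof.
  intros Hc Hp.
  rewrite (RInt_ext _ (fun t => (fun u => g u * cos (IZR n * u + IZR n * a)) (t - a))).
  2:{ intros x _. f_equal. f_equal. ring. }
  rewrite (RInt_sub_per (fun u => g u * cos (IZR n * u + IZR n * a)) a).
  - rewrite (RInt_ext _ (fun u => cos (IZR n * a) * (g u * cos (IZR n * u)) + (- sin (IZR n * a)) * (g u * sin (IZR n * u)))).
    2:{ intros x _. rewrite cos_plus. unfold CompleteNormedModule.sort; simpl. ring. }
    rewrite RInt_lin2. unfold intC, intS. ring.
    apply Cont_ex_RInt, Cont_mult; auto using Cont_cos'.
    apply Cont_ex_RInt, Cont_mult; auto using Cont_sin'.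
  - apply Cont_mult; auto using Cont_cos.
  - intros t. rewrite Hp. f_equal. transitivity (cos ((IZR n * t + IZR n * a) + IZR n * (2*PI))). f_equal; ring. apply cos_Zper.
Qed.

Lemma trig_shiftS g a n : Cont g -> per g ->
  @eq R (RInt (fun t => g (t - a) * sin (IZR n * t)) 0 (2 * PI))
  (sin (IZR n * a) * intC g n + cos (IZR n * a) * intS g n).
Proof.
  intros Hc Hp.
  rewrite (RInt_ext _ (fun t => (fun u => g u * sin (IZR n * u + IZR n * a)) (t - a))).
  2:{ intros x _. f_equal. f_equal. ring. }
  rewrite (RInt_sub_per (fun u => g u * sin (IZR n * u + IZR n * a)) a).
  - rewrite (RInt_ext _ (fun u => sin (IZR n * a) * (g u * cos (IZR n * u)) + cos (IZR n * a) * (g u * sin (IZR n * u)))).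
    2:{ intros x _. rewrite sin_plus. unfold CompleteNormedModule.sort; simpl. ring. }
    rewrite RInt_lin2. unfold intC, intS. ring.
    apply Cont_ex_RInt, Cont_mult; auto using Cont_cos'.
    apply Cont_ex_RInt, Cont_mult; auto using Cont_sin'.
  - apply Cont_mult; auto using Cont_sin.
  - intros t. rewrite Hp. f_equal. transitivity (sin ((IZR n * t + IZR n * a) + IZR n * (2*PI))). f_equal; ring. apply sin_Zper.
Qed.

Lemma cos_2PIn (n : Z) : cos (IZR n * (2 * PI)) = 1.
Proof. rewrite <- (Rplus_0_l (IZR n * (2 * PI))), cos_Zper. apply cos_0. Qed.
Lemma sin_2PIn (n : Z) : sin (IZR n * (2 * PI)) = 0.
Proof. rewrite <- (Rplus_0_l (IZR n * (2 * PI))), sin_Zper. apply sin_0. Qed.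

Lemma IBP_C g a n : smooth g -> per g ->
  @eq R (RInt (fun t => Derive g (t - a) * cos (IZR n * t)) 0 (2 * PI))
        (IZR n * RInt (fun t => g (t - a) * sin (IZR n * t)) 0 (2 * PI)).
Proof.
  intros Hs Hp.
  assert (HI : is_RInt (fun t => 1 * (Derive g (t - a) * cos (IZR n * t)) + (- IZR n) * (g (t - a) * sin (IZR n * t))) 0 (2 * PI)
     (minus ((fun t => g (t - a) * cos (IZR n * t)) (2 * PI)) ((fun t => g (t - a) * cos (IZR n * t)) 0))).
  { apply (@is_RInt_derive R_CompleteNormedModule (fun t => g (t - a) * cos (IZR n * t))).
    - intros x _. auto_derive. apply (Hs 1%nat). replace (x + - a) with (x - a) by ring. change (fun x0 : R => g x0) with g. simpl. ring.
    - intros x _. apply (Cont_plus (fun t => 1 * (Derive g (t - a) * cos (IZR n * t))) (fun t => - IZR n * (g (t - a) * sin (IZR n * t)))).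
      + apply (Cont_mult (fun _ => 1)). apply Cont_const. apply Cont_mult. apply (Cont_Dshift g 1); auto. apply Cont_cos'.
      + apply (Cont_mult (fun _ => - IZR n)). apply Cont_const. apply Cont_mult.
        apply (Cont_ext (fun t => Derive_n g 0 (t - a))). reflexivity. apply Cont_Dshift; auto. apply Cont_sin'. }
  apply (@is_RInt_unique R_CompleteNormedModule) in HI.
  rewrite RInt_lin2 in HI.
  - simpl in HI. unfold minus, plus, opp in HI; simpl in HI.
    replace (2 * PI - a) with (- a + 2 * PI) in HI by ring. rewrite Hp, cos_2PIn in HI.
    replace (IZR n * 0) with 0 in HI by ring. rewrite cos_0 in HI.
    replace (0 - a) with (- a) in HI by ring. lra.
  - apply Cont_ex_RInt. apply Cont_mult. apply (Cont_Dshift g 1); auto. apply Cont_cos'.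
  - apply Cont_ex_RInt. apply Cont_mult.
    apply (Cont_ext (fun t => Derive_n g 0 (t - a))). reflexivity. apply Cont_Dshift; auto. apply Cont_sin'.
Qed.

Lemma IBP_S g a n : smooth g -> per g ->
  @eq R (RInt (fun t => Derive g (t - a) * sin (IZR n * t)) 0 (2 * PI))
        (- IZR n * RInt (fun t => g (t - a) * cos (IZR n * t)) 0 (2 * PI)).
Proof.
  intros Hs Hp.
  assert (HI : is_RInt (fun t => 1 * (Derive g (t - a) * sin (IZR n * t)) + (IZR n) * (g (t - a) * cos (IZR n * t))) 0 (2 * PI)
     (minus ((fun t => g (t - a) * sin (IZR n * t)) (2 * PI)) ((fun t => g (t - a) * sin (IZR n * t)) 0))).
  { apply (@is_RInt_derive R_CompleteNormedModule (fun t => g (t - a) * sin (IZR n * t))).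
    - intros x _. auto_derive. apply (Hs 1%nat). replace (x + - a) with (x - a) by ring. change (fun x0 : R => g x0) with g. simpl. ring.
    - intros x _. apply (Cont_plus (fun t => 1 * (Derive g (t - a) * sin (IZR n * t))) (fun t => IZR n * (g (t - a) * cos (IZR n * t)))).
      + apply (Cont_mult (fun _ => 1)). apply Cont_const. apply Cont_mult. apply (Cont_Dshift g 1); auto. apply Cont_sin'.
      + apply (Cont_mult (fun _ => IZR n)). apply Cont_const. apply Cont_mult.
        apply (Cont_ext (fun t => Derive_n g 0 (t - a))). reflexivity. apply Cont_Dshift; auto. apply Cont_cos'. }
  apply (@is_RInt_unique R_CompleteNormedModule) in HI.
  rewrite RInt_lin2 in HI.
  - simpl in HI. unfold minus, plus, opp in HI; simpl in HI.
    replace (2 * PI - a) with (- a + 2 * PI) in HI by ring. rewrite Hp, sin_2PIn in HI.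
    replace (IZR n * 0) with 0 in HI by ring. rewrite sin_0 in HI.
    replace (0 - a) with (- a) in HI by ring. lra.
  - apply Cont_ex_RInt. apply Cont_mult. apply (Cont_Dshift g 1); auto. apply Cont_sin'.
  - apply Cont_ex_RInt. apply Cont_mult.
    apply (Cont_ext (fun t => Derive_n g 0 (t - a))). reflexivity. apply Cont_Dshift; auto. apply Cont_cos'.
Qed.

Lemma fourier_Dshift g a n : smooth g -> per g ->
  fourier (fun t => Derive_n g 1 (t - a)) n =
  (IZR n / (2 * PI) * (sin (IZR n * a) * intC g n + cos (IZR n * a) * intS g n),
   IZR n / (2 * PI) * (cos (IZR n * a) * intC g n - sin (IZR n * a) * intS g n)).
Proof.
  intros Hs Hp. unfold fourier. simpl.
  rewrite IBP_C, IBP_S by auto.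
  rewrite trig_shiftC, trig_shiftS by (auto using Cont_smooth).
  apply injective_projections; simpl; field; apply PI_neq0.
Qed.

Lemma fourier_eq f g n : (forall t, f t = g t) -> fourier f n = fourier g n.
Proof. intros E. assert (f = g) by (apply functional_extensionality; auto). subst; reflexivity. Qed.

Lemma fourier_lin f h K n : Cont f -> Cont h ->
  fourier (fun t => f t + K * h t) n = Cplus (fourier f n) (Cmult (RtoC K) (fourier h n)).
Proof.
  intros Hf Hh. unfold fourier.
  rewrite (RInt_ext (fun t => (f t + K * h t) * cos (IZR n * t)) (fun t => 1 * (f t * cos (IZR n * t)) + K * (h t * cos (IZR n * t))))
    by (intros; simpl; ring).
  rewrite (RInt_ext (fun t => (f t + K * h t) * sin (IZR n * t)) (fun t => 1 * (f t * sin (IZR n * t)) + K * (h t * sin (IZR n * t))))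
    by (intros; simpl; ring).
  rewrite !RInt_lin2 by (apply Cont_ex_RInt, Cont_mult; auto using Cont_cos', Cont_sin').
  unfold Cplus, Cmult, RtoC. apply injective_projections; simpl; ring.
Qed.

Lemma Cont_K j : Cont (fun t => (1 + cos (t - PI)) ^ j).
Proof. intros x. apply (@ex_derive_continuous R_AbsRing R_NormedModule). auto_derive. auto. Qed.

Lemma RInt_ge_const f a b L : a <= b -> ex_RInt f a b -> (forall x, a < x < b -> L <= f x) ->
  (b - a) * L <= RInt f a b.
Proof.
  intros Hab Hf H. assert (E := RInt_const a b L).
  assert (HL := RInt_le (fun _ => L) f a b Hab (ex_RInt_const _ _ _) Hf H).
  rewrite E in HL. exact HL.
Qed.

Lemma cos_le_d d u : 0 < d -> d <= u -> u <= PI -> cos u <= cos d.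
Proof.
  intros Hd H1 H2. destruct (Rle_lt_or_eq_dec d u H1) as [H|H].
  - left. apply cos_decreasing_1; lra.
  - subst; lra.
Qed.

Lemma cos_ge_d0 d s : d <= PI -> 0 <= s <= d -> cos d <= cos s.
Proof.
  intros HdP Hs. destruct (Rle_lt_or_eq_dec s d (proj2 Hs)) as [H|H].
  - left. apply cos_decreasing_1; lra.
  - subst; lra.
Qed.

Lemma cos_ge_d d s : d <= PI -> Rabs s <= d -> cos d <= cos s.
Proof.
  intros HdP Hs. destruct (Rle_or_lt 0 s).
  - rewrite Rabs_right in Hs by lra. apply cos_ge_d0; lra.
  - rewrite Rabs_left in Hs by lra. rewrite <- (cos_neg s). apply cos_ge_d0; lra.
Qed.

Lemma core f : Cont f -> 0 < f PI ->
  (forall N, @eq R (RInt (fun t => f t * (1 + cos (t - PI)) ^ N) 0 (2 * PI)) 0) -> False.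
Proof.
  intros Hc Hf0 HN. set (c := f PI) in *.
  assert (Hpt : forall x, continuity_pt f x) by (intros x; apply continuity_pt_filterlim, Hc).
  destruct (Hpt PI (c / 2)) as [alp [Halp Hal]]. lra.
  assert (Hpos : forall t, Rabs (t - PI) < alp -> c / 2 < f t).
  { intros t Ht. destruct (Req_dec t PI) as [->|Hne]. unfold c in *; lra.
    assert (Hd := Hal t). simpl in Hd. unfold R_dist, D_x, no_cond in Hd.
    assert (Rabs (f t - f PI) < c / 2) by (apply Hd; split; [split; auto | auto]).
    apply Rabs_def2 in H. unfold c in *. lra. }
  set (d := Rmin (alp / 2) (PI / 2)).
  assert (Hd0 : 0 < d) by (unfold d; apply Rmin_glb_lt; [lra | generalize PI_RGT_0; lra]).
  assert (Hd1 : d <= alp / 2) by apply Rmin_l.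
  assert (Hd2 : d <= PI / 2) by apply Rmin_r.
  destruct (continuity_ab_min f 0 (2 * PI)) as [mx [Hmx _]].
  { generalize PI_RGT_0; lra. } { intros; apply Hpt. }
  set (M := Rabs (f mx)).
  assert (HM0 : 0 <= M) by apply Rabs_pos.
  assert (HM : forall t, 0 <= t <= 2 * PI -> - M <= f t).
  { intros t Ht. specialize (Hmx t Ht). unfold M. pose proof (Rle_abs (- f mx)). rewrite Rabs_Ropp in H. lra. }
  set (q := 1 + cos d). set (r := 1 + cos (d / 2)).
  assert (HPI := PI_RGT_0).
  assert (Hq0 : 0 <= q) by (unfold q; generalize (COS_bound d); lra).
  assert (Hqr : q < r) by (unfold q, r; apply Rplus_lt_compat_l; apply cos_decreasing_1; lra).
  assert (Hr1 : 1 < r) by (unfold r; assert (0 < cos (d / 2)) by (apply cos_gt_0; lra); lra).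
  set (y := d * c / (4 * PI * (M + 1))).
  assert (Hy : 0 < y) by (unfold y; apply Rdiv_lt_0_compat; [apply Rmult_lt_0_compat; lra | nra]).
  assert (Hqr1 : Rabs (q / r) < 1).
  { rewrite Rabs_right. apply (Rmult_lt_reg_r r). lra. unfold Rdiv. rewrite Rmult_assoc, Rinv_l by lra. lra.
    apply Rle_ge, Rdiv_le_0_compat; lra. }
  destruct (pow_lt_1_zero (q / r) Hqr1 y Hy) as [N HNy].
  specialize (HNy N (le_n N)). specialize (HN N).
  set (F := fun t => f t * (1 + cos (t - PI)) ^ N) in HN.
  assert (HF : Cont F) by (apply Cont_mult; auto; apply Cont_K).
  set (A := r ^ N). set (B := (q / r) ^ N).
  assert (HA : 0 < A) by (apply pow_lt; lra).
  assert (HB0 : 0 <= B) by (apply pow_le; apply Rdiv_le_0_compat; lra).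
  assert (HBy : B < y) by (pose proof (Rle_abs B); unfold B in *; lra).
  assert (HqN : q ^ N = B * A).
  { unfold A, B. rewrite <- Rpow_mult_distr. f_equal. field. lra. }
  assert (Kpos : forall t, 0 <= (1 + cos (t - PI)) ^ N) by (intros; apply pow_le; generalize (COS_bound (t - PI)); lra).
  assert (Kfar : forall t, d <= Rabs (t - PI) <= PI -> (1 + cos (t - PI)) ^ N <= q ^ N).
  { intros t Ht. apply pow_incr. split. generalize (COS_bound (t - PI)); lra.
    unfold q. apply Rplus_le_compat_l. destruct (Rle_or_lt 0 (t - PI)).
    - rewrite Rabs_right in Ht by lra. apply cos_le_d; lra.
    - rewrite Rabs_left in Ht by lra. rewrite <- (cos_neg (t - PI)). apply cos_le_d; lra. }
  assert (Knear : forall t, Rabs (t - PI) <= d / 2 -> A <= (1 + cos (t - PI)) ^ N).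
  { intros t Ht. apply pow_incr. split. lra. unfold r. apply Rplus_le_compat_l. apply cos_ge_d; lra. }
  assert (I1 : (PI - d - 0) * (- M * q ^ N) <= RInt F 0 (PI - d)).
  { apply RInt_ge_const. lra. apply Cont_ex_RInt; auto. intros x Hx. unfold F.
    assert (d <= Rabs (x - PI) <= PI) by (rewrite Rabs_left by lra; lra).
    specialize (Kfar x H). specialize (Kpos x). specialize (HM x ltac:(lra)). nra. }
  assert (I5 : (2 * PI - (PI + d)) * (- M * q ^ N) <= RInt F (PI + d) (2 * PI)).
  { apply RInt_ge_const. lra. apply Cont_ex_RInt; auto. intros x Hx. unfold F.
    assert (d <= Rabs (x - PI) <= PI) by (rewrite Rabs_right by lra; lra).
    specialize (Kfar x H). specialize (Kpos x). specialize (HM x ltac:(lra)). nra. }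
  assert (I2 : (PI - d / 2 - (PI - d)) * 0 <= RInt F (PI - d) (PI - d / 2)).
  { apply RInt_ge_const. lra. apply Cont_ex_RInt; auto. intros x Hx. unfold F.
    assert (c / 2 < f x) by (apply Hpos; rewrite Rabs_left by lra; lra).
    specialize (Kpos x). nra. }
  assert (I4 : (PI + d - (PI + d / 2)) * 0 <= RInt F (PI + d / 2) (PI + d)).
  { apply RInt_ge_const. lra. apply Cont_ex_RInt; auto. intros x Hx. unfold F.
    assert (c / 2 < f x) by (apply Hpos; rewrite Rabs_right by lra; lra).
    specialize (Kpos x). nra. }
  assert (I3 : (PI + d / 2 - (PI - d / 2)) * (c / 2 * A) <= RInt F (PI - d / 2) (PI + d / 2)).
  { apply RInt_ge_const. lra. apply Cont_ex_RInt; auto. intros x Hx. unfold F.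
    assert (c / 2 < f x) by (apply Hpos; apply Rabs_def1; lra).
    assert (A <= (1 + cos (x - PI)) ^ N) by (apply Knear; apply Rabs_le; lra). nra. }
  assert (Hsum : RInt F 0 (2 * PI) = RInt F 0 (PI - d) + RInt F (PI - d) (PI - d / 2) +
     RInt F (PI - d / 2) (PI + d / 2) + RInt F (PI + d / 2) (PI + d) + RInt F (PI + d) (2 * PI)).
  { rewrite <- (RInt_Chasles F 0 (PI - d) (2 * PI)) by (apply Cont_ex_RInt; auto).
    rewrite <- (RInt_Chasles F (PI - d) (PI - d / 2) (2 * PI)) by (apply Cont_ex_RInt; auto).
    rewrite <- (RInt_Chasles F (PI - d / 2) (PI + d / 2) (2 * PI)) by (apply Cont_ex_RInt; auto).
    rewrite <- (RInt_Chasles F (PI + d / 2) (PI + d) (2 * PI)) by (apply Cont_ex_RInt; auto).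
    unfold plus; simpl. ring. }
  rewrite HN in Hsum. rewrite HqN in I1, I5.
  assert (E1 : B * (4 * PI * (M + 1)) < d * c).
  { replace (d * c) with (y * (4 * PI * (M + 1))) by (unfold y; field; nra).
    apply Rmult_lt_compat_r. nra. lra. }
  assert (E2 : 0 <= B * A * M) by (apply Rmult_le_pos; [apply Rmult_le_pos|]; lra).
  assert (E3 : (PI - d) * M * (B * A) <= PI * (M + 1) * (B * A)).
  { apply Rmult_le_compat_r. nra. nra. }
  assert (E4 : PI * (M + 1) * (B * A) * 4 < d * c * A).
  { replace (PI * (M + 1) * (B * A) * 4) with ((B * (4 * PI * (M + 1))) * A) by ring.
    apply Rmult_lt_compat_r; lra. }
  assert (E5 : 0 >= (PI - d - 0) * (- M * (B * A)) + (PI - d / 2 - (PI - d)) * 0 +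
     (PI + d / 2 - (PI - d / 2)) * (c / 2 * A) + (PI + d - (PI + d / 2)) * 0 +
     (2 * PI - (PI + d)) * (- M * (B * A))) by lra.
  assert (E6 : 0 >= d * c * A / 2 - 2 * ((PI - d) * M * (B * A))) by (ring_simplify in E5; ring_simplify; lra).
  lra.
Qed.

Lemma Cont_shift f a : Cont f -> Cont (fun t => f (t - a)).
Proof.
  intros Hf x. apply (@continuous_comp R_UniformSpace R_UniformSpace R_UniformSpace (fun t => t - a) f x).
  apply (@ex_derive_continuous R_AbsRing R_NormedModule). auto_derive. auto. apply Hf.
Qed.

Lemma zero_induct f : Cont f -> (forall m, intC f m = 0 /\ intS f m = 0) ->
  forall j m phi, @eq R (RInt (fun t => f t * (cos (IZR m * t + phi) * (1 + cos (t - PI)) ^ j)) 0 (2 * PI)) 0.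
Proof.
  intros Hc Hz j. induction j; intros m phi.
  - rewrite (RInt_ext _ (fun t => cos phi * (f t * cos (IZR m * t)) + (- sin phi) * (f t * sin (IZR m * t)))).
    2:{ intros x _. rewrite cos_plus. unfold CompleteNormedModule.sort; simpl. ring. }
    rewrite RInt_lin2. destruct (Hz m) as [H1 H2]. unfold intC, intS in *. rewrite H1, H2. ring.
    apply Cont_ex_RInt, Cont_mult; auto using Cont_cos'.
    apply Cont_ex_RInt, Cont_mult; auto using Cont_sin'.
  - rewrite (RInt_ext _ (fun t => 1 * (f t * (cos (IZR m * t + phi) * (1 + cos (t - PI)) ^ j)) +
        (/ 2) * (1 * (f t * (cos (IZR (m + 1) * t + (phi - PI)) * (1 + cos (t - PI)) ^ j)) +
                 1 * (f t * (cos (IZR (m - 1) * t + (phi + PI)) * (1 + cos (t - PI)) ^ j))))).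
    2:{ intros x _. rewrite plus_IZR, minus_IZR. simpl.
        replace ((IZR m + 1) * x + (phi - PI)) with ((IZR m * x + phi) + (x - PI)) by ring.
        replace ((IZR m - 1) * x + (phi + PI)) with ((IZR m * x + phi) - (x - PI)) by ring.
        rewrite (cos_plus (IZR m * x + phi) (x - PI)), (cos_minus (IZR m * x + phi) (x - PI)). unfold CompleteNormedModule.sort; simpl. field. }
    assert (Hcj : forall m' phi', Cont (fun t => f t * (cos (IZR m' * t + phi') * (1 + cos (t - PI)) ^ j))).
    { intros. apply Cont_mult; auto. apply Cont_mult. apply Cont_cos. apply Cont_K. }
    rewrite RInt_lin2. 2: apply Cont_ex_RInt; auto.
    2:{ apply Cont_ex_RInt. apply Cont_plus; apply Cont_mult; auto using Cont_const. }
    rewrite (RInt_lin2 _ _ 1 1).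
    + rewrite IHj, IHj, IHj. ring.
    + apply Cont_ex_RInt; auto.
    + apply Cont_ex_RInt; auto.
Qed.

Lemma zero_pi f : Cont f -> (forall m, intC f m = 0 /\ intS f m = 0) -> f PI = 0.
Proof.
  intros Hc Hz.
  assert (HK : forall N, @eq R (RInt (fun t => f t * (1 + cos (t - PI)) ^ N) 0 (2 * PI)) 0).
  { intros N. rewrite (RInt_ext _ (fun t => f t * (cos (IZR 0 * t + 0) * (1 + cos (t - PI)) ^ N))).
    apply zero_induct; auto.
    intros x _. rewrite Rmult_0_l, Rplus_0_l, cos_0. unfold CompleteNormedModule.sort; simpl. ring. }
  destruct (Rtotal_order (f PI) 0) as [Hn|[He|Hp]]; auto.
  - exfalso. apply (core (fun t => - f t)).
    + apply Cont_opp; auto.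
    + lra.
    + intros N. rewrite (RInt_ext _ (fun t => (-1) * (f t * (1 + cos (t - PI)) ^ N) + 0 * (f t * (1 + cos (t - PI)) ^ N))).
      rewrite RInt_lin2, HK. ring.
      apply Cont_ex_RInt, Cont_mult; auto using Cont_K.
      apply Cont_ex_RInt, Cont_mult; auto using Cont_K.
      intros x _. unfold CompleteNormedModule.sort; simpl. ring.
  - exfalso. apply (core f Hc Hp HK).
Qed.

Lemma fourier_unique f : Cont f -> per f -> (forall m, intC f m = 0 /\ intS f m = 0) -> forall x, f x = 0.
Proof.
  intros Hc Hp Hz x.
  set (a := PI - x).
  assert (E : f x = (fun t => f (t - a)) PI) by (simpl; unfold a; f_equal; ring).
  rewrite E. apply (zero_pi (fun t => f (t - a))). apply Cont_shift; auto.
  intros m. unfold intC, intS. rewrite trig_shiftC, trig_shiftS by auto.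
  destruct (Hz m) as [H1 H2]. rewrite H1, H2. split; ring.
Qed.

Lemma equal_from_fourier f g : smooth f -> smooth g -> per f -> per g ->
  (forall m, fourier f m = fourier g m) -> forall x, f x = g x.
Proof.
  intros Hf Hg Pf Pg H x.
  assert (Hh : forall m, fourier (fun t => f t + (-1) * g t) m = (0, 0)).
  { intros m. rewrite fourier_lin by (apply Cont_smooth; auto). rewrite H.
    unfold Cplus, Cmult, RtoC. apply injective_projections; simpl; ring. }
  assert (Z := fourier_unique (fun t => f t + (-1) * g t)).
  enough ((fun t => f t + (-1) * g t) x = 0) by (simpl in H0; lra).
  apply Z.
  - apply Cont_plus. apply Cont_smooth; auto. apply (Cont_mult (fun _ => -1)). apply Cont_const. apply Cont_smooth; auto.
  - intros t. simpl. rewrite Pf, Pg. reflexivity.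
  - intros m. specialize (Hh m). unfold fourier in Hh. apply pair_equal_spec in Hh. destruct Hh as [H1 H2].
    assert (HP : / (2 * PI) <> 0) by (apply Rinv_neq_0_compat; generalize PI_RGT_0; lra).
    unfold intC, intS. split.
    + apply Rmult_integral in H1. destruct H1 as [H1|H1]; [contradiction|]. exact H1.
    + assert (/ (2 * PI) * RInt (fun t => (f t + -1 * g t) * sin (IZR m * t)) 0 (2 * PI) = 0) by lra.
      apply Rmult_integral in H0. destruct H0; [contradiction|]. exact H0.
Qed.

Lemma ra_smooth f : real_analytic f -> smooth f.
Proof. intros [H _]. exact H. Qed.

Theorem lemma3 (u0 v0 s0 : R) (k : nat) (n : Z) :
  0 < u0 -> 0 < v0 -> 1 < s0 -> (2 <= k)%nat ->
  exists H : (nat -> Z -> C) -> (nat -> Z -> C) -> (nat -> R) -> C,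
  forall (omega : nat -> R) (U V : nat -> R -> R),
    0 < omega O ->
    (forall j, (1 <= j)%nat -> real_analytic (U j) /\ periodic2pi (U j)) ->
    (forall j, (1 <= j)%nat -> real_analytic (V j) /\ periodic2pi (V j)) ->
    fourier (dcoef U V omega u0 v0 s0 k) n =
      Cplus
        (Cmult (Cmult (Cmult (RtoC (u0 / v0 / v0 * IZR n * omega (k - 1)%nat * s0)) Ci)
                      (fourier (V 1%nat) n))
               (cis (- (IZR n * omega O * s0))))
        (H (fun j m => if andb (1 <=? j)%nat (j <=? k)%nat then fourier (U j) m else RtoC 0)
           (fun j m => if andb (1 <=? j)%nat (j <=? k)%nat then fourier (V j) m else RtoC 0)
           (fun j => if (j <=? k - 2)%nat then omega j else 0)).
Proof.
  intros Hu0 Hv0 Hs0 Hk.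
  set (main := fun (omega : nat -> R) (V : nat -> R -> R) =>
        (Cmult (Cmult (Cmult (RtoC (u0 / v0 / v0 * IZR n * omega (k - 1)%nat * s0)) Ci)
                      (fourier (V 1%nat) n))
               (cis (- (IZR n * omega O * s0))))).
  set (dU := fun (U : nat -> R -> R) => fun j m => if andb (1 <=? j)%nat (j <=? k)%nat then fourier (U j) m else RtoC 0).
  set (dw := fun (omega : nat -> R) => fun j => if (j <=? k - 2)%nat then omega j else 0).
  set (P := fun Uh Vh wh (z : C) => exists omega U V, 0 < omega O /\
      (forall j, (1 <= j)%nat -> real_analytic (U j) /\ periodic2pi (U j)) /\
      (forall j, (1 <= j)%nat -> real_analytic (V j) /\ periodic2pi (V j)) /\
      Uh = dU U /\ Vh = dU V /\ wh = dw omega /\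
      fourier (dcoef U V omega u0 v0 s0 k) n = Cplus (main omega V) z).
  exists (fun Uh Vh wh => epsilon (inhabits (RtoC 0)) (P Uh Vh wh)).
  intros omega U V H0 HU HV.
  change (fourier (dcoef U V omega u0 v0 s0 k) n = Cplus (main omega V) (epsilon (inhabits (RtoC 0)) (P (dU U) (dU V) (dw omega)))).
  assert (Hex : exists z, P (dU U) (dU V) (dw omega) z).
  { exists (Cminus (fourier (dcoef U V omega u0 v0 s0 k) n) (main omega V)).
    exists omega, U, V. split; [auto|]. split; [auto|]. split; [auto|].
    split; [reflexivity|]. split; [reflexivity|]. split; [reflexivity|].
    unfold Cminus, Cplus, Copp. apply injective_projections; simpl; ring. }
  destruct (epsilon_spec (inhabits (RtoC 0)) (P (dU U) (dU V) (dw omega)) Hex) as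
    [omega' [U' [V' [H0' [HU' [HV' [EU [EV [Ew Heq]]]]]]]]].
  set (z := epsilon (inhabits (RtoC 0)) (P (dU U) (dU V) (dw omega))) in *.
  clearbody z.
  assert (HUU : forall j, (1 <= j <= k)%nat -> U j = U' j).
  { intros j Hj. apply functional_extensionality.
    destruct (HU j ltac:(lia)) as [A1 A2]. destruct (HU' j ltac:(lia)) as [B1 B2].
    apply equal_from_fourier; auto using ra_smooth.
    intros m. apply (f_equal (fun F => F j m)) in EU. unfold dU in EU.
    replace (andb (1 <=? j)%nat (j <=? k)%nat) with true in EU. exact EU.
    symmetry. apply andb_true_intro; split; apply Nat.leb_le; lia. }
  assert (HVV : forall j, (1 <= j <= k)%nat -> V j = V' j).
  { intros j Hj. apply functional_extensionality.
    destruct (HV j ltac:(lia)) as [A1 A2]. destruct (HV' j ltac:(lia)) as [B1 B2].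
    apply equal_from_fourier; auto using ra_smooth.
    intros m. apply (f_equal (fun F => F j m)) in EV. unfold dU in EV.
    replace (andb (1 <=? j)%nat (j <=? k)%nat) with true in EV. exact EV.
    symmetry. apply andb_true_intro; split; apply Nat.leb_le; lia. }
  assert (Hww : forall i, (i <= k - 2)%nat -> omega i = omega' i).
  { intros i Hi. apply (f_equal (fun F => F i)) in Ew. unfold dw in Ew.
    replace (i <=? k - 2)%nat with true in Ew. exact Ew. symmetry. apply Nat.leb_le; lia. }
  assert (Hw0 : omega O = omega' O) by (apply Hww; lia).
  destruct k as [|N]. lia.
  assert (HN1 : (1 <= N)%nat) by lia.
  assert (Hd : forall i, (i < N)%nat -> delta omega s0 i = delta omega' s0 i).
  { intros i Hi. unfold delta. destruct i. reflexivity. rewrite Hww by lia. reflexivity. }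
  set (K := u0 * s0 * (omega N - omega' N) / v0 ^ 2).
  assert (Hpt : forall t, dcoef U V omega u0 v0 s0 (S N) t =
      dcoef U' V' omega' u0 v0 s0 (S N) t + K * Derive_n (V' 1%nat) 1 (t - s0 * omega O)).
  { intros t. rewrite (dcoef_congr U V U' V') by auto.
    assert (E := dcoef_diff omega omega' s0 t N Hw0 Hd U' V' u0 v0 HN1 ltac:(lra)).
    unfold delta in E. destruct N as [|N']. lia.
    match goal with |- ?a = ?b + ?c => enough (X : a - b = c) by lra end.
    rewrite E. unfold K. field. lra. }
  assert (HV1 := HVV 1%nat ltac:(lia)). destruct (HV' 1%nat (le_n 1)) as [HV1a HV1p].
  rewrite (fourier_eq _ _ n Hpt).
  rewrite (fourier_lin (dcoef U' V' omega' u0 v0 s0 (S N)) (fun t => Derive_n (V' 1%nat) 1 (t - s0 * omega O)) K n).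
  2:{ apply Cont_dcoef; intros j Hj. apply ra_smooth, (HU' j Hj). apply ra_smooth, (HV' j Hj). }
  2:{ apply Cont_Dshift. apply ra_smooth; auto. }
  rewrite Heq. rewrite fourier_Dshift by (auto using ra_smooth).
  unfold main. rewrite HV1, <- Hw0.
  replace (S N - 1)%nat with N by lia.
  replace (IZR n * (s0 * omega O)) with (IZR n * omega O * s0) by ring.
  change (fourier (V' 1%nat) n) with (/ (2 * PI) * intC (V' 1%nat) n, - (/ (2 * PI) * intS (V' 1%nat) n)).
  destruct z as [z1 z2]. unfold cis. rewrite cos_neg, sin_neg.
  unfold Cplus, Cmult, RtoC, Ci, K. apply injective_projections; simpl; field; split; try lra; apply PI_neq0.
Qed.
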